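(* Let $(G_i)_{i\in I}$ be a finite collection of groups. For $J\subset I$ put $G_J=\prod_{i\in J}G_i$ and let $p_J\colon G_I\to G_J$ be the projection, with induced ring homomorphism $\mathbb Zp_J\colon\mathbb ZG_I\to\mathbb ZG_J$. Then for every $s\in\mathbb N$, $$\bigcap_{J\subset I,\ \#J<s}\ker(\mathbb Zp_J)\subset\Delta(G_I)^s.$$
   Context: For a group $G$, $\mathbb ZG$ is the integral group ring, $\Delta(G)$ its augmentation ideal (kernel of the map sending each group element to $1$), $\Delta(G)^0=\mathbb ZG$ and $\Delta(G)^s$ its $s$-th power. An empty intersection of subsets of $\mathbb ZG_I$ is $\mathbb ZG_I$. *)

(* Defs.v *)
(* Groups are MathComp 2.5's (possibly infinite) [groupType]
   from boot/monoid.v; the integral group ring ZG is modelled on the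
   finitely-supported functions G -> int of multinomials' [monalg]
   ({malg int[G]}), with the group-ring (convolution) product defined below. *)
From HB Require Import structures.
From mathcomp Require Import all_boot all_order all_algebra.
From mathcomp Require Import finmap.
From mathcomp Require monalg.
Import monalg.

Set Implicit Arguments.
Unset Strict Implicit.
Unset Printing Implicit Defensive.

Import GRing.Theory.
Local Open Scope ring_scope.

Definition prodG (K : finType) (F : K -> groupType) := {dffun forall k, F k}.

Section ProdG.
Variables (K : finType) (F : K -> groupType).
HB.instance Definition _ := Choice.on (prodG F).

Definition prodG_one : prodG F := [ffun k => (1 : F k)%g].
Definition prodG_inv (x : prodG F) : prodG F := [ffun k => ((x k)^-1)%g].
Definition prodG_mul (x y : prodG F) : prodG F := [ffun k => (x k * y k)%g].

Lemma prodG_mulA : associative prodG_mul.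
Proof. by move=> x y z; apply/ffunP=> k; rewrite !ffunE mulgA. Qed.
Lemma prodG_mul1 : left_id prodG_one prodG_mul.
Proof. by move=> x; apply/ffunP=> k; rewrite !ffunE mul1g. Qed.
Lemma prodG_mulg1 : right_id prodG_one prodG_mul.
Proof. by move=> x; apply/ffunP=> k; rewrite !ffunE mulg1. Qed.
Lemma prodG_mulV : left_inverse prodG_one prodG_inv prodG_mul.
Proof. by move=> x; apply/ffunP=> k; rewrite !ffunE mulVg. Qed.
Lemma prodG_mulgV : right_inverse prodG_one prodG_inv prodG_mul.
Proof. by move=> x; apply/ffunP=> k; rewrite !ffunE mulgV. Qed.

HB.instance Definition _ := isGroup.Build (prodG F)
  prodG_mulA prodG_mul1 prodG_mulg1 prodG_mulV prodG_mulgV.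
End ProdG.

Definition subprodG (I : finType) (G : I -> groupType) (J : {set I}) :=
  prodG (fun j : {i : I | i \in J} => G (val j)).

Definition projG (I : finType) (G : I -> groupType) (J : {set I})
  (x : prodG G) : subprodG G J := [ffun j => x (val j)].

Definition ZG (G : groupType) := {malg int[G]}.

Definition ZGmul (G : groupType) (x y : ZG G) : ZG G :=
  \sum_(g <- msupp x) \sum_(h <- msupp y) << (x@_g * y@_h) *g (g * h)%g >>.

Definition ZGmap (G H : groupType) (f : G -> H) (x : ZG G) : ZG H :=
  \sum_(g <- msupp x) << x@_g *g f g >>.

Definition augm (G : groupType) (x : ZG G) : int := \sum_(g <- msupp x) x@_g.
Definition augIdeal (G : groupType) (x : ZG G) : Prop := augm x = 0.

Inductive idealMul (G : groupType) (P Q : ZG G -> Prop) : ZG G -> Prop :=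
  | idealMul0 : idealMul P Q 0
  | idealMulD a b x : P a -> Q b -> idealMul P Q x ->
                      idealMul P Q (ZGmul a b + x).

Fixpoint augPow (G : groupType) (s : nat) : ZG G -> Prop :=
  match s with
  | 0 => fun _ => True
  | s'.+1 => idealMul (@augIdeal G) (@augPow G s')
  end.

(* Main.v *)
Require Import Defs.
From HB Require Import structures.
From mathcomp Require Import all_boot all_order all_algebra.
From mathcomp Require Import finmap.
From mathcomp Require monalg.
Import monalg.
Set Implicit Arguments.
Unset Strict Implicit.
Unset Printing Implicit Defensive.
Import GRing.Theory.
Local Open Scope ring_scope.

Section ZGTheory.
Variable H : groupType.
Implicit Types (x y z : ZG H).

Lemma sum_supp_w (V : nmodType) x (d : {fset H}) (F : H -> int -> V) :
  (forall g, F g 0 = 0) -> (msupp x `<=` d)%fset ->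
  \sum_(g <- msupp x) F g x@_g = \sum_(g <- d) F g x@_g.
Proof.
move=> F0 le; apply: big_fset_incl => // g _ /mcoeff_outdom ->; exact: F0.
Qed.

Lemma ZGmulw x y (d1 d2 : {fset H}) : (msupp x `<=` d1)%fset -> (msupp y `<=` d2)%fset ->
  ZGmul x y = \sum_(g <- d1) \sum_(h <- d2) << (x@_g * y@_h) *g (g * h)%g >>.
Proof.
move=> l1 l2; rewrite /ZGmul.
rewrite (sum_supp_w (F := fun g c => \sum_(h <- msupp y) << (c * y@_h) *g (g * h)%g >>) _ l1); last first.
  by move=> g; rewrite big1 // => h _; rewrite mul0r monalgU0.
apply: eq_bigr => g _.
rewrite (sum_supp_w (F := fun h c => << (x@_g * c) *g (g * h)%g >>) _ l2) //.
by move=> h; rewrite mulr0 monalgU0.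
Qed.

Lemma ZGmulDl x y z : ZGmul (x + y) z = ZGmul x z + ZGmul y z.
Proof.
rewrite (@ZGmulw (x + y) z _ _ (msuppD_le x y) (fsubset_refl _)).
rewrite (@ZGmulw x z (msupp x `|` msupp y)%fset _ (fsubsetUl _ _) (fsubset_refl _)).
rewrite (@ZGmulw y z (msupp x `|` msupp y)%fset _ (fsubsetUr _ _) (fsubset_refl _)).
rewrite -big_split; apply: eq_bigr => g _; rewrite -big_split; apply: eq_bigr => h _.
by rewrite mcoeffD mulrDl monalgUD.
Qed.

Lemma ZGmulNl x z : ZGmul (- x) z = - ZGmul x z.
Proof.
rewrite /ZGmul msuppN -sumrN; apply: eq_bigr => g _; rewrite -sumrN.
by apply: eq_bigr => h _; rewrite mcoeffN mulNr monalgUN.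
Qed.

Lemma ZGmulBl x y z : ZGmul (x - y) z = ZGmul x z - ZGmul y z.
Proof. by rewrite ZGmulDl ZGmulNl. Qed.

Lemma ZGmulDr x y z : ZGmul x (y + z) = ZGmul x y + ZGmul x z.
Proof.
rewrite (@ZGmulw x (y + z) _ _ (fsubset_refl _) (msuppD_le y z)).
rewrite (@ZGmulw x y _ (msupp y `|` msupp z)%fset (fsubset_refl _) (fsubsetUl _ _)).
rewrite (@ZGmulw x z _ (msupp y `|` msupp z)%fset (fsubset_refl _) (fsubsetUr _ _)).
rewrite -big_split; apply: eq_bigr => g _; rewrite -big_split; apply: eq_bigr => h _.
by rewrite mcoeffD mulrDr monalgUD.
Qed.

Lemma ZGmulr0 x : ZGmul x 0 = 0.
Proof. by rewrite /ZGmul big1 // => g _; rewrite msupp0 big_seq_fset0. Qed.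

Lemma ZGmul_sumr x (T : Type) (r : seq T) (P : pred T) (F : T -> ZG H) :
  ZGmul x (\sum_(i <- r | P i) F i) = \sum_(i <- r | P i) ZGmul x (F i).
Proof.
exact: (big_morph (ZGmul x) (fun a b => ZGmulDr x a b) (ZGmulr0 x)).
Qed.

Lemma ZGmulUU c1 c2 (k1 k2 : H) :
  ZGmul << c1 *g k1 >> << c2 *g k2 >> = << c1 * c2 *g (k1 * k2)%g >>.
Proof. by rewrite (ZGmulw msuppU_le msuppU_le) !big_seq_fset1 !mcoeffUU. Qed.

Lemma ZGmul1l x : ZGmul << (1%g : H) >> x = x.
Proof.
rewrite (ZGmulw msuppU_le (fsubset_refl _)) big_seq_fset1 [RHS]monalgE.
by apply: eq_bigr => h _; rewrite mcoeffUU mul1r mul1g.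
Qed.

Lemma augmw x (d : {fset H}) : (msupp x `<=` d)%fset -> augm x = \sum_(g <- d) x@_g.
Proof. by move=> l; rewrite /augm (sum_supp_w (F := fun _ c => c) _ l). Qed.

Lemma augmB x y : augm (x - y) = augm x - augm y.
Proof.
rewrite (@augmw (x - y) _ (msuppB_le x y)).
rewrite (@augmw x (msupp x `|` msupp y)%fset (fsubsetUl _ _)).
rewrite (@augmw y (msupp x `|` msupp y)%fset (fsubsetUr _ _)).
by rewrite -sumrB; apply: eq_bigr => g _; rewrite mcoeffB.
Qed.

Lemma augmU c (k : H) : augm << c *g k >> = c.
Proof. by rewrite (augmw msuppU_le) big_seq_fset1 mcoeffUU. Qed.

Lemma ZGmap_coef (K : groupType) (f : H -> K) x k :
  (ZGmap f x)@_k = \sum_(g <- msupp x | f g == k) x@_g.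
Proof.
rewrite /ZGmap raddf_sum /= [RHS]big_mkcond /=; apply: eq_bigr => g _.
by rewrite mcoeffU; case: (f g == k).
Qed.

Lemma malgUZ (s c : int) (k : H) : << s * c *g k >> = s *: << c *g k >>.
Proof. by apply/malgP => k'; rewrite mcoeffZ !mcoeffU mulrnAr. Qed.

End ZGTheory.
Section AugPow.
Variable H : groupType.

Lemma idealMul_add (P Q : ZG H -> Prop) x y :
  idealMul P Q x -> idealMul P Q y -> idealMul P Q (x + y).
Proof.
elim=> [|a b z Pa Qb _ IH] Hy; first by rewrite add0r.
rewrite -addrA; exact: idealMulD Pa Qb (IH Hy).
Qed.

Lemma idealMul_mono (P Q Q' : ZG H -> Prop) x :
  (forall y, Q y -> Q' y) -> idealMul P Q x -> idealMul P Q' x.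
Proof.
move=> QQ; elim=> [|a b z Pa Qb _ IH]; first exact: idealMul0.
exact: idealMulD Pa (QQ _ Qb) IH.
Qed.

Lemma augPowS n (x : ZG H) : augPow n.+1 x -> augPow n x.
Proof.
elim: n x => [//|n IH] x /=; apply: idealMul_mono; exact: IH.
Qed.

Lemma augPow_le m n (x : ZG H) : (n <= m)%N -> augPow m x -> augPow n x.
Proof.
elim: m => [|m IH]; first by rewrite leqn0 => /eqP ->.
rewrite leq_eqVlt => /orP[/eqP -> //|]; rewrite ltnS => le Hx.
exact: IH le (augPowS Hx).
Qed.

Lemma augPow0 n : augPow n (0 : ZG H).
Proof. by case: n => //= n; exact: idealMul0. Qed.

Lemma augPowD n (x y : ZG H) : augPow n x -> augPow n y -> augPow n (x + y).
Proof. by case: n => //= n; exact: idealMul_add. Qed.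

Lemma augPow_sum n T (r : seq T) (P : pred T) (F : T -> ZG H) :
  (forall i, P i -> augPow n (F i)) -> augPow n (\sum_(i <- r | P i) F i).
Proof. move=> HF; apply: big_ind => //; [exact: augPow0 | exact: augPowD]. Qed.

End AugPow.

Section Prod.
Variables (I : finType) (G : I -> groupType).
Local Notation GI := (prodG G).

Definition eJ (J : {set I}) (g : GI) : GI :=
  [ffun i => if i \in J then g i else 1%g].

Lemma prodG_mulE (x y : GI) i : (x * y)%g i = (x i * y i)%g.
Proof. by rewrite /= ffunE. Qed.

Lemma eJU1 a (J : {set I}) g : a \notin J ->
  eJ (a |: J) g = (eJ [set a] g * eJ J g)%g.
Proof.
move=> aJ; apply/ffunP => i; rewrite prodG_mulE !ffunE !inE.
case: (eqVneq i a) => [->|_] /=; first by rewrite (negPf aJ) mulg1.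
by rewrite mul1g.
Qed.

Lemma eJT g : eJ setT g = g.
Proof. by apply/ffunP => i; rewrite ffunE inE. Qed.

Lemma eJ_proj J (g h : GI) : (eJ J g == eJ J h) = (projG J g == projG J h).
Proof.
apply/eqP/eqP => E.
  apply/ffunP => j; rewrite !ffunE; move/ffunP/(_ (val j)): E.
  by rewrite /= !ffunE (valP j).
apply/ffunP => i; rewrite !ffunE; case: ifP => // iJ.
move/ffunP/(_ (exist _ i iJ)): E; rewrite !ffunE; exact.
Qed.

Lemma ker_eJ J (x : ZG GI) : ZGmap (@projG I G J) x = 0 -> ZGmap (eJ J) x = 0.
Proof.
move=> Hx; apply/malgP => k; rewrite ZGmap_coef mcoeff0.
case hk: (has (fun g => eJ J g == k) (msupp x)).
  move/hasP: hk => [g0 g0x /eqP <-].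
  rewrite (eq_bigl (fun g => projG J g == projG J g0)); last by move=> g; rewrite eJ_proj.
  by rewrite -(ZGmap_coef (@projG I G J)) Hx mcoeff0.
rewrite big_seq_cond big1 // => g /andP[gx e].
by move/hasPn: hk => /(_ g gx); rewrite e.
Qed.

Definition PK (K : {set I}) (c : int) (g : GI) : ZG GI :=
  \sum_(J : {set I} | J \subset K) << (-1) ^+ #|K :\: J| * c *g eJ J g >>.

Lemma sum_subsetU1 (V : nmodType) a (K : {set I}) (F : {set I} -> V) : a \notin K ->
  \sum_(J : {set I} | J \subset a |: K) F J =
  \sum_(J : {set I} | J \subset K) (F J + F (a |: J)).
Proof.
move=> aK; rewrite big_split /= (bigID (fun J : {set I} => a \in J)) /= addrC.
congr (_ + _).
  apply: eq_bigl => J; apply/andP/idP => [[sJ aJ]|sJ].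
    apply/subsetP => i iJ; have := subsetP sJ i iJ; rewrite !inE => /orP[/eqP ei|//].
    by move: aJ; rewrite -ei iJ.
  split; first exact: subset_trans sJ (subsetUr _ _).
  by apply: contra aK; exact: (subsetP sJ).
rewrite (reindex_onto (fun J => a |: J) (fun J => J :\ a)) /=; last first.
  by move=> J /andP[_ aJ]; rewrite setD1K.
apply: eq_bigl => J; apply/idP/idP.
  move=> /andP[/andP[s _] /eqP e].
  have aJ : a \notin J by rewrite -e !inE eqxx.
  apply/subsetP => i iJ; have := subsetP s i; rewrite !inE iJ orbT => /(_ isT).
  case/orP => [/eqP ei|//]; by move: aJ; rewrite -ei iJ.
move=> sJ; have aJ : a \notin J by apply: contra aK; exact: (subsetP sJ).
by rewrite setU1K // eqxx setU11 setUS.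
Qed.

Lemma PK_U1 (a : I) (K : {set I}) (c : int) (g : GI) : a \notin K ->
  PK (a |: K) c g = ZGmul (<< eJ [set a] g >> - << (1%g : GI) >>) (PK K c g).
Proof.
move=> aK; rewrite /PK sum_subsetU1 // ZGmulBl ZGmul1l ZGmul_sumr -sumrB.
apply: eq_bigr => J sJ.
have aJ : a \notin J by apply: contra aK; exact: (subsetP sJ).
have E1 : (a |: K) :\: J = a |: (K :\: J).
  by apply/setP => i; rewrite !inE; case: eqP => // ->; rewrite (negPf aJ).
have E2 : (a |: K) :\: (a |: J) = K :\: J.
  by apply/setP => i; rewrite !inE; case: eqP => // ->; rewrite (negPf aK) andbF.
rewrite E1 E2 cardsU1 !inE (negPf aK) andbF /= add1n exprS mulN1r mulNr monalgUN.
by rewrite ZGmulUU mul1r -eJU1 // addrC.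
Qed.

Lemma PK_augPow n : forall (K : {set I}) (c : int) (g : GI), #|K| = n -> augPow n (PK K c g).
Proof.
elim: n => [//|n IH] K c g cK.
have [a aK] : exists a, a \in K by apply/set0Pn; rewrite -card_gt0 cK.
have aK' : a \notin K :\ a by rewrite !inE eqxx.
have cK' : #|K :\ a| = n by move: cK; rewrite (cardsD1 a) aK => -[].
rewrite -(setD1K aK) PK_U1 //= -[ZGmul _ _]addr0.
apply: idealMulD; last exact: idealMul0.
  by rewrite /augIdeal augmB !augmU subrr.
exact: IH.
Qed.

Lemma sum_PK n : forall (A : {set I}) (c : int) (g : GI), #|A| = n ->
  \sum_(K : {set I} | K \subset A) PK K c g = << c *g eJ A g >>.
Proof.
elim: n => [|n IH] A c g cA.
  move/eqP: cA; rewrite cards_eq0 => /eqP ->.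
  rewrite (big_pred1 set0); last by move=> J; rewrite subset0.
  rewrite /PK (big_pred1 set0); last by move=> J; rewrite subset0.
  by rewrite setDv cards0 expr0 mul1r.
have [a aA] : exists a, a \in A by apply/set0Pn; rewrite -card_gt0 cA.
have aA' : a \notin A :\ a by rewrite !inE eqxx.
have cA' : #|A :\ a| = n by move: cA; rewrite (cardsD1 a) aA => -[].
rewrite -(setD1K aA) sum_subsetU1 //.
rewrite (eq_bigr (fun K => ZGmul << eJ [set a] g >> (PK K c g))); last first.
  move=> K sK; have aK : a \notin K by apply: contra aA'; exact: (subsetP sK).
  by rewrite PK_U1 // ZGmulBl ZGmul1l addrC subrK.
by rewrite -ZGmul_sumr IH // ZGmulUU mul1r -eJU1.
Qed.

End Prod.

Theorem mainTheorem4 (I : finType) (G : I -> groupType) (s : nat)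
  (x : ZG (prodG G)) :
  (forall J : {set I}, (#|J| < s)%N -> ZGmap (@projG I G J) x = 0) ->
  augPow s x.
Proof.
move=> Hx.
rewrite [x]monalgE.
rewrite (eq_bigr (fun g => \sum_(K : {set I} | K \subset setT) PK K x@_g g)); last first.
  by move=> g _; rewrite (@sum_PK I G #|[set: I]|) // eJT.
rewrite exchange_big /= (bigID (fun K : {set I} => (#|K| < s)%N)) /=.
rewrite big1 ?add0r; last first.
  move=> K /andP[_ cK].
  rewrite /PK exchange_big /= big1 // => J sJ.
  have cJ : (#|J| < s)%N by apply: leq_ltn_trans (subset_leq_card sJ) cK.
  under eq_bigr => g _ do rewrite malgUZ.
  by rewrite -scaler_sumr -/(ZGmap (eJ J) x) (ker_eJ (Hx J cJ)) scaler0.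
apply: augPow_sum => K /andP[_ cK].
apply: augPow_sum => g _.
apply: (@augPow_le _ #|K|); first by rewrite leqNgt.
exact: PK_augPow.
Qed.
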